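(* Assume Case 4 holds with index $k$. Let $(C,D)=(n_{k+1},m_{k+1})$ and for $n\ge1$ put $(C_n,D_n)=(\gamma_n-(\gamma-C)d^{n-1},\ Dd^{n-1})$ and $(C_n^*,D_n^* )=\big((\delta^{n-1}+\delta^{n-2}D+\cdots+D^{n-1})C,\ D^n\big)$. (i) If $\delta>T_k$, then for every $n\ge1$, $(C_n,D_n)$ is the vertex of $N(Q^n)$ immediately following $(\gamma_n,d^n)$ (in order of increasing $x$-coordinate), the segment joining them has slope $-(l_1+l_2)^{-1}$, and $\delta^n$ is strictly bigger than the $y$-intercept of the line through these two points. (ii) If $\delta=T_k$ and $m_{k+1}>0$, then for every $n\ge1$, $(C_n^*,D_n^* )$ is the vertex of $N(Q^n)$ immediately following $(\gamma_n,d^n)$, the segment joining them has slope $-(l_1+l_2)^{-1}$, and $\delta^n$ equals the $y$-intercept of the line through these two points.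
   Context: Let $f(z,w)=(p(z),q(z,w))$ be a holomorphic skew product germ at the origin of $\mathbb{C}^2$ with $f(0,0)=(0,0)$, where $p(z)=a_\delta z^\delta+O(z^{\delta+1})$ with $a_\delta\neq0$ and integer $\delta\ge1$, and $q(z,w)=\sum_{i+j\ge1}b_{ij}z^iw^j$ is not identically zero. For $n\ge1$ write $f^n=(p^n,Q^n)$. The Newton polygon $N(g)$ of a nonzero germ $g=\sum g_{ij}z^iw^j$ is the convex hull of $\bigcup_{g_{ij}\neq0}\{(x,y):x\ge i,\ y\ge j\}$. Let $(n_1,m_1),\dots,(n_s,m_s)$ be the vertices of $N(q)$ with $n_1<\cdots<n_s$, $m_1>\cdots>m_s$; for $1\le k\le s-1$ let $T_k$ be the $y$-intercept of the line through $(n_k,m_k)$ and $(n_{k+1},m_{k+1})$. Case 4 means: $s>2$ and $T_k\le\delta\le T_{k-1}$ for some $2\le k\le s-1$; for this $k$ set $(\gamma,d)=(n_k,m_k)$, $l_1=\frac{n_k-n_{k-1}}{m_{k-1}-m_k}$ and $l_2$ defined by $l_1+l_2=\frac{n_{k+1}-n_k}{m_k-m_{k+1}}$. Define $\gamma_n=\gamma(\delta^{n-1}+\delta^{n-2}d+\cdots+d^{n-1})$. *)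

(* Defs.v *)
From HB Require Import structures.
From mathcomp Require Import all_boot all_order all_algebra.
From mathcomp Require Import reals.
From mathcomp Require Import complex.
Set Implicit Arguments. Unset Strict Implicit. Unset Printing Implicit Defensive.
Import Order.TTheory GRing.Theory Num.Theory.
Local Open Scope ring_scope.

Section Defs.
Variable R : realType.
Local Notation C := R[i].

(* A power series in (z,w): coefficient of z^i w^j is g i j. *)
Definition ps2 := nat -> nat -> C.
Definition ps1 := nat -> C.

(* convergent (= holomorphic germ at the origin): Cauchy-type bound *)
Definition convergent2 (g : ps2) : Prop :=
  exists (M r : R), 0 < r /\ forall i j, `|g i j| <= real_complex R (M * r ^+ (i + j)).
Definition convergent1 (g : ps1) : Prop :=
  exists (M r : R), 0 < r /\ forall i, `|g i| <= real_complex R (M * r ^+ i).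

Definition one2 : ps2 := fun i j => if (i == 0%N) && (j == 0%N) then 1 else 0.
Definition Xz : ps2 := fun i j => if (i == 1%N) && (j == 0%N) then 1 else 0.
Definition Xw : ps2 := fun i j => if (i == 0%N) && (j == 1%N) then 1 else 0.
Definition lift1 (g : ps1) : ps2 := fun i j => if j == 0%N then g i else 0.

Definition mul2 (g h : ps2) : ps2 := fun i j =>
  \sum_(a < i.+1) \sum_(b < j.+1) g a b * h (i - a)%N (j - b)%N.
Definition pow2 (g : ps2) (n : nat) : ps2 := iter n (mul2 g) one2.

(* g(P(z,w), S(z,w)) for P, S without constant term: only the (finitely
   many) terms a + b <= i + j contribute to the coefficient of z^i w^j. *)
Definition comp2 (g P S : ps2) : ps2 := fun i j =>
  \sum_(a < (i + j).+1) \sum_(b < (i + j).+1)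
     g a b * mul2 (pow2 P a) (pow2 S b) i j.

(* f = (p, q);  f^n = (p^n, Q^n) with f^0 = id, f^(n+1) = f o f^n *)
Definition fiter (p : ps1) (q : ps2) (n : nat) : ps2 * ps2 :=
  iter n (fun PS => (comp2 (lift1 p) PS.1 PS.2, comp2 q PS.1 PS.2)) (Xz, Xw).
Definition Qn (p : ps1) (q : ps2) (n : nat) : ps2 := (fiter p q n).2.

Definition quadrants (g : ps2) (v : R * R) : Prop :=
  exists i j, g i j != 0 /\ (i%:R <= v.1) /\ (j%:R <= v.2).

Definition convex_hull (U : R * R -> Prop) (v : R * R) : Prop :=
  exists (n : nat) (lam : 'I_n -> R) (pt : 'I_n -> R * R),
    (forall k, 0 <= lam k) /\ \sum_(k < n) lam k = 1 /\
    (forall k, U (pt k)) /\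
    v.1 = \sum_(k < n) lam k * (pt k).1 /\
    v.2 = \sum_(k < n) lam k * (pt k).2.

Definition newton_polygon (g : ps2) : R * R -> Prop :=
  convex_hull (quadrants g).

Definition vertex (K : R * R -> Prop) (v : R * R) : Prop :=
  K v /\ forall (a b : R * R) (t : R), K a -> K b -> 0 < t -> t < 1 ->
    v.1 = t * a.1 + (1 - t) * b.1 -> v.2 = t * a.2 + (1 - t) * b.2 -> a = b.

Definition next_vertex (K : R * R -> Prop) (v1 v2 : R * R) : Prop :=
  vertex K v1 /\ vertex K v2 /\ v1.1 < v2.1 /\
  forall v, vertex K v -> ~ (v1.1 < v.1 /\ v.1 < v2.1).

Definition slope (v1 v2 : R * R) : R := (v2.2 - v1.2) / (v2.1 - v1.1).
Definition yintercept (v1 v2 : R * R) : R := v1.2 - slope v1 v2 * v1.1.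

Definition pt (x y : nat) : R * R := (x%:R, y%:R).

End Defs.

Definition gsum (a b n : nat) : nat := \sum_(i < n) a ^ (n.-1 - i) * b ^ i.

(* Main.v *)
Require Import Defs.
From HB Require Import structures.
From mathcomp Require Import all_boot all_order all_algebra.
From mathcomp Require Import reals complex.
From mathcomp.algebra_tactics Require Import ring lra.
From Stdlib Require Import Classical Lia.
From mathcomp Require Import zify.
Import Order.TTheory GRing.Theory Num.Theory.
Local Open Scope ring_scope.
Set Implicit Arguments. Unset Strict Implicit.


Definition phi {R : realType} (al be : R) (i j : nat) : R := al * i%:R + be * j%:R.

Definition Lead {R : realType} (g : ps2 R) (al be sg : R) (X Y : nat) : Prop :=
  g X Y != 0 /\ forall i j, g i j != 0 ->
    phi al be X Y <= phi al be i j /\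
    (phi al be i j = phi al be X Y -> sg * Y%:R <= sg * j%:R).

Lemma phiD {R : realType} (al be : R) i1 j1 i2 j2 :
  phi al be (i1 + i2) (j1 + j2) = phi al be i1 j1 + phi al be i2 j2.
Proof. rewrite /phi !natrD; ring. Qed.

Lemma phiM {R : realType} (al be : R) a i j :
  phi al be (a * i) (a * j) = a%:R * phi al be i j.
Proof. rewrite /phi !natrM; ring. Qed.

Lemma sum_nz {T : nmodType} n (F : 'I_n -> T) :
  \sum_(i < n) F i != 0 -> exists i, F i != 0.
Proof.
move=> H; case: (pickP (fun i => F i != 0)) => [i Hi|H0]; first by exists i.
by move: H; rewrite big1 ?eqxx // => i _; move/negbFE: (H0 i) => /eqP.
Qed.

Lemma mul2_nz {R : realType} (g h : ps2 R) i j : mul2 g h i j != 0 ->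
  exists a b, (a <= i)%N /\ (b <= j)%N /\ g a b != 0 /\ h (i - a)%N (j - b)%N != 0.
Proof.
rewrite /mul2 => /sum_nz [a] /sum_nz [b]; rewrite mulf_eq0 negb_or => /andP [H1 H2].
exists a, b; split; first by rewrite -ltnS. split; first by rewrite -ltnS. by [].
Qed.

Lemma sum_single {T : nmodType} n (F : 'I_n -> T) (i0 : 'I_n) :
  (forall i, i != i0 -> F i = 0) -> \sum_(i < n) F i = F i0.
Proof.
move=> H; rewrite (bigD1 i0) //= big1 ?addr0 // => i Hi; exact: H.
Qed.

Lemma natr_eq {R : realType} (a b : nat) : (a%:R : R) = b%:R -> a = b.
Proof. by move/eqP; rewrite eqr_nat => /eqP. Qed.

Lemma mul2_lead {R : realType} (al be sg : R) (g h : ps2 R) X1 Y1 X2 Y2 :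
  al != 0 -> sg != 0 ->
  Lead g al be sg X1 Y1 -> Lead h al be sg X2 Y2 ->
  Lead (mul2 g h) al be sg (X1 + X2) (Y1 + Y2) /\
  mul2 g h (X1 + X2)%N (Y1 + Y2)%N = g X1 Y1 * h X2 Y2.
Proof.
move=> Hal Hsg [g0 Hg] [h0 Hh].
have key : forall i j a b, (a <= i)%N -> (b <= j)%N -> g a b != 0 ->
    h (i - a)%N (j - b)%N != 0 ->
    phi al be (X1 + X2) (Y1 + Y2) <= phi al be i j /\
    (phi al be i j = phi al be (X1 + X2) (Y1 + Y2) ->
       sg * (Y1 + Y2)%:R <= sg * j%:R /\
       (sg * (Y1 + Y2)%:R = sg * j%:R -> a = X1 /\ b = Y1)).
  move=> i j a b Ha Hb Hab Hab'.
  have Ei : i = (a + (i - a))%N by rewrite subnKC.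
  have Ej : j = (b + (j - b))%N by rewrite subnKC.
  have [L1 E1] := Hg _ _ Hab; have [L2 E2] := Hh _ _ Hab'.
  have Hp : phi al be i j = phi al be a b + phi al be (i - a) (j - b).
    by rewrite -phiD -Ei -Ej.
  rewrite phiD Hp; split; first by lra.
  move=> Heq.
  have e1 : phi al be a b = phi al be X1 Y1 by lra.
  have e2 : phi al be (i - a) (j - b) = phi al be X2 Y2 by lra.
  have s1 := E1 e1; have s2 := E2 e2.
  have Hj : (j%:R : R) = b%:R + (j - b)%N%:R by rewrite -natrD -Ej.
  rewrite natrD Hj; split; first by lra.
  move=> Hs.
  have sb : sg * b%:R = sg * Y1%:R by lra.
  have bY : b = Y1 by apply: natr_eq; apply: (mulfI Hsg).
  split => //.
  move: e1; rewrite /phi bY => e1.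
  have : al * a%:R = al * X1%:R by lra.
  by move/(mulfI Hal)/natr_eq.
have i1 : (X1 < (X1 + X2).+1)%N by rewrite ltnS leq_addr.
have i2 : (Y1 < (Y1 + Y2).+1)%N by rewrite ltnS leq_addr.
have coef : mul2 g h (X1 + X2)%N (Y1 + Y2)%N = g X1 Y1 * h X2 Y2.
  rewrite /mul2 (sum_single (i0 := inord X1)); last first.
    move=> a Ha; rewrite big1 // => b _.
    apply/eqP; rewrite mulf_eq0; apply: contraT; rewrite negb_or => /andP [n1 n2].
    have Hai : (a <= X1 + X2)%N by rewrite -ltnS.
    have Hbj : (b <= Y1 + Y2)%N by rewrite -ltnS.
    have [_ K] := key _ _ _ _ Hai Hbj n1 n2.
    have [_ K2] := K erefl; have [ea _] := K2 erefl.
    by move: Ha; rewrite -val_eqE /= ea inordK ?eqxx.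
  rewrite (sum_single (i0 := inord Y1)); last first.
    move=> b Hb.
    apply/eqP; rewrite mulf_eq0; apply: contraT; rewrite negb_or => /andP [n1 n2].
    have Hai : (@inord (X1 + X2) X1 <= X1 + X2)%N by rewrite inordK // leq_addr.
    have Hbj : (b <= Y1 + Y2)%N by rewrite -ltnS.
    have [_ K] := key _ _ _ _ Hai Hbj n1 n2.
    have [_ K2] := K erefl; have [_ eb] := K2 erefl.
    by move: Hb; rewrite -val_eqE /= eb inordK ?eqxx.
  by rewrite (inordK i1) (inordK i2) !addKn.
split => //; split; first by rewrite coef mulf_neq0.
move=> i j /mul2_nz [a [b [Ha [Hb [n1 n2]]]]].
have [K1 K] := key _ _ _ _ Ha Hb n1 n2; split => // e.
by have [] := K e.
Qed.

Lemma lead_one {R : realType} (al be sg : R) : Lead (@one2 R) al be sg 0 0.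
Proof.
split; first by rewrite /one2 /= oner_neq0.
move=> i j; rewrite /one2; case: (i == 0%N) / eqP => [->|]; case: (j == 0%N) / eqP => [->|] //=;
  by rewrite eqxx.
Qed.

Lemma pow2_lead {R : realType} (al be sg : R) (g : ps2 R) X Y :
  al != 0 -> sg != 0 -> Lead g al be sg X Y ->
  forall a, Lead (pow2 g a) al be sg (a * X) (a * Y).
Proof.
move=> Hal Hsg Hg; elim=> [|a IH]; first by rewrite !mul0n; exact: lead_one.
rewrite !mulSn; have [L _] := mul2_lead Hal Hsg Hg IH; exact: L.
Qed.

Lemma comp2_lead {R : realType} (al be sg : R) (q P S : ps2 R) XP YP XS YS a0 b0 :
  al != 0 -> sg != 0 -> Lead P al be sg XP YP -> Lead S al be sg XS YS ->
  (0 < XP + YP)%N -> (0 < XS + YS)%N ->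
  q a0 b0 != 0 ->
  (forall a b, q a b != 0 ->
     a0%:R * phi al be XP YP + b0%:R * phi al be XS YS <=
       a%:R * phi al be XP YP + b%:R * phi al be XS YS /\
     (a%:R * phi al be XP YP + b%:R * phi al be XS YS =
        a0%:R * phi al be XP YP + b0%:R * phi al be XS YS ->
      a0%:R * (sg * YP%:R) + b0%:R * (sg * YS%:R) <= a%:R * (sg * YP%:R) + b%:R * (sg * YS%:R) /\
      (a0%:R * (sg * YP%:R) + b0%:R * (sg * YS%:R) = a%:R * (sg * YP%:R) + b%:R * (sg * YS%:R) ->
       a = a0 /\ b = b0))) ->
  Lead (comp2 q P S) al be sg (a0 * XP + b0 * XS) (a0 * YP + b0 * YS).
Proof.
move=> Hal Hsg LP LS HP HS q0 Hq.
pose M a b := mul2 (pow2 P a) (pow2 S b).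
have LM : forall a b, Lead (M a b) al be sg (a * XP + b * XS) (a * YP + b * YS) /\
     M a b (a * XP + b * XS)%N (a * YP + b * YS)%N = pow2 P a (a * XP) (a * YP) * pow2 S b (b * XS) (b * YS).
  move=> a b; exact: mul2_lead Hal Hsg (pow2_lead Hal Hsg LP a) (pow2_lead Hal Hsg LS b).
have phM : forall a b, phi al be (a * XP + b * XS) (a * YP + b * YS) =
    a%:R * phi al be XP YP + b%:R * phi al be XS YS.
  by move=> a b; rewrite phiD !phiM.
have sgM : forall a b, sg * (a * YP + b * YS)%N%:R = a%:R * (sg * YP%:R) + b%:R * (sg * YS%:R).
  by move=> a b; rewrite natrD !natrM; ring.
have key : forall i j a b, q a b != 0 -> M a b i j != 0 ->
   phi al be (a0 * XP + b0 * XS) (a0 * YP + b0 * YS) <= phi al be i j /\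
   (phi al be i j = phi al be (a0 * XP + b0 * XS) (a0 * YP + b0 * YS) ->
     sg * (a0 * YP + b0 * YS)%N%:R <= sg * j%:R /\
     (sg * (a0 * YP + b0 * YS)%N%:R = sg * j%:R -> a = a0 /\ b = b0)).
  move=> i j a b qab Mab.
  have [[_ HM] _] := LM a b; have [M1 M2] := HM _ _ Mab.
  have [Q1 Q2] := Hq _ _ qab.
  rewrite phM in M1; rewrite phM in M2; rewrite phM; split; first exact: le_trans Q1 M1.
  move=> e.
  have e1 : a%:R * phi al be XP YP + b%:R * phi al be XS YS =
        a0%:R * phi al be XP YP + b0%:R * phi al be XS YS.
    by apply/eqP; rewrite eq_le Q1 andbT -e.
  have [Q3 Q4] := Q2 e1.
  have := M2 (etrans e (esym e1)); rewrite sgM => M3.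
  rewrite sgM; split; first exact: le_trans Q3 M3.
  move=> e2; apply: Q4; apply/eqP; rewrite eq_le Q3 /= e2; exact: M3.
have coef : comp2 q P S (a0 * XP + b0 * XS)%N (a0 * YP + b0 * YS)%N =
    q a0 b0 * M a0 b0 (a0 * XP + b0 * XS)%N (a0 * YP + b0 * YS)%N.
  have ha : (a0 < (a0 * XP + b0 * XS + (a0 * YP + b0 * YS)).+1)%N.
    rewrite ltnS addnACA -mulnDr (leq_trans _ (leq_addr _ _)) //.
    by rewrite -{1}(muln1 a0) leq_mul2l HP orbT.
  have hb : (b0 < (a0 * XP + b0 * XS + (a0 * YP + b0 * YS)).+1)%N.
    rewrite ltnS addnACA -mulnDr -mulnDr (leq_trans _ (leq_addl _ _)) //.
    by rewrite -{1}(muln1 b0) leq_mul2l HS orbT.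
  rewrite /comp2 (sum_single (i0 := inord a0)); last first.
    move=> a Ha; rewrite big1 // => b _.
    apply/eqP; rewrite mulf_eq0; apply: contraT; rewrite negb_or => /andP [n1 n2].
    have [_ K] := key _ _ _ _ n1 n2; have [_ K2] := K erefl; have [ea _] := K2 erefl.
    by move: Ha; rewrite -val_eqE /= ea inordK ?eqxx.
  rewrite (sum_single (i0 := inord b0)); last first.
    move=> b Hb.
    apply/eqP; rewrite mulf_eq0; apply: contraT; rewrite negb_or => /andP [n1 n2].
    have [_ K] := key _ _ _ _ n1 n2; have [_ K2] := K erefl; have [_ eb] := K2 erefl.
    by move: Hb; rewrite -val_eqE /= eb inordK ?eqxx.
  by rewrite (inordK ha) (inordK hb).
split.
  rewrite coef mulf_neq0 //; have [[L0 _] ->] := LM a0 b0.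
  have [L1 _] := pow2_lead Hal Hsg LP a0; have [L2 _] := pow2_lead Hal Hsg LS b0.
  by rewrite mulf_neq0.
move=> i j; rewrite /comp2 => /sum_nz [a] /sum_nz [b].
rewrite mulf_eq0 negb_or => /andP [n1 n2].
have [K1 K] := key _ _ _ _ n1 n2; split => // e; by have [] := K e.
Qed.


Lemma hull_quad {R : realType} (g : ps2 R) v : quadrants g v -> newton_polygon g v.
Proof.
move=> H; exists 1%N, (fun _ => 1), (fun _ => v); rewrite !big_ord1 !mul1r.
by split => //; split => //.
Qed.

Lemma hull_up {R : realType} (g : ps2 R) v h1 h2 : newton_polygon g v -> 0 <= h1 -> 0 <= h2 ->
  newton_polygon g (v.1 + h1, v.2 + h2).
Proof.
move=> [n [lam [pt [L0 [L1 [LU [E1 E2]]]]]]] H1 H2.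
exists n, lam, (fun k => ((pt k).1 + h1, (pt k).2 + h2)); split => //; split => //; split.
  move=> k; have [i [j [nz [a b]]]] := LU k; exists i, j; split => //=; split; lra.
rewrite /= E1 E2; split.
  rewrite -[h1]mul1r -{1}L1 mulr_suml -big_split /=; apply: eq_bigr => k _; ring.
rewrite -[h2]mul1r -{1}L1 mulr_suml -big_split /=; apply: eq_bigr => k _; ring.
Qed.

Lemma sum_split {R : realType} n1 n2 (F : 'I_(n1 + n2) -> R) F1 F2 :
  (forall i, F (lshift n2 i) = F1 i) -> (forall i, F (rshift n1 i) = F2 i) ->
  \sum_(i < n1 + n2) F i = \sum_(i < n1) F1 i + \sum_(i < n2) F2 i.
Proof.
move=> H1 H2; rewrite big_split_ord; congr (_ + _); apply: eq_bigr => i _; [exact: H1|exact: H2].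
Qed.

Lemma hull_conv {R : realType} (g : ps2 R) a b t : newton_polygon g a -> newton_polygon g b ->
  0 <= t -> t <= 1 ->
  newton_polygon g (t * a.1 + (1 - t) * b.1, t * a.2 + (1 - t) * b.2).
Proof.
move=> [n1 [lam1 [pt1 [L10 [L11 [LU1 [E11 E12]]]]]]] [n2 [lam2 [pt2 [L20 [L21 [LU2 [E21 E22]]]]]]] t0 t1.
pose lam (i : 'I_(n1 + n2)) := match split i with inl x => t * lam1 x | inr y => (1 - t) * lam2 y end.
pose pt (i : 'I_(n1 + n2)) := match split i with inl x => pt1 x | inr y => pt2 y end.
have sl : forall i : 'I_n1, split (lshift n2 i) = inl i by move=> i; exact: (@unsplitK n1 n2 (inl i)).
have sr : forall i : 'I_n2, split (rshift n1 i) = inr i by move=> i; exact: (@unsplitK n1 n2 (inr i)).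
exists (n1 + n2)%N, lam, pt; split.
  by move=> i; rewrite /lam; case: (split i) => x; apply: mulr_ge0 => //; lra.
split.
  rewrite (@sum_split _ _ _ _ (fun i => t * lam1 i) (fun i => (1 - t) * lam2 i)); last 2 first.
  - by move=> i; rewrite /lam sl.
  - by move=> i; rewrite /lam sr.
  by rewrite -!mulr_sumr L11 L21; ring.
split; first by move=> i; rewrite /pt; case: (split i).
rewrite (@sum_split _ _ _ _ (fun i => t * lam1 i * (pt1 i).1) (fun i => (1 - t) * lam2 i * (pt2 i).1)); last 2 first.
- by move=> i; rewrite /lam /pt sl.
- by move=> i; rewrite /lam /pt sr.
rewrite (@sum_split _ _ _ _ (fun i => t * lam1 i * (pt1 i).2) (fun i => (1 - t) * lam2 i * (pt2 i).2)); last 2 first.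
- by move=> i; rewrite /lam /pt sl.
- by move=> i; rewrite /lam /pt sr.
rewrite E11 E12 E21 E22 !mulr_sumr; split; congr (_ + _); apply: eq_bigr => i _; ring.
Qed.

Lemma hull_bound {R : realType} (g : ps2 R) (al be sg c Y : R) :
  0 <= al -> 0 < be ->
  (forall i j, g i j != 0 -> c <= phi al be i j /\ (phi al be i j = c -> sg * Y <= sg * j%:R)) ->
  forall v, newton_polygon g v ->
    c <= al * v.1 + be * v.2 /\ (al * v.1 + be * v.2 = c -> sg * Y <= sg * v.2).
Proof.
move=> Hal Hbe Hg v [n [lam [pt [L0 [L1 [LU [E1 E2]]]]]]].
have hb0 : be != 0 by rewrite gt_eqF.
have Ephi : al * v.1 + be * v.2 = \sum_k lam k * (al * (pt k).1 + be * (pt k).2).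
  rewrite E1 E2 !mulr_sumr -big_split; apply: eq_bigr => k _ /=; ring.
have Hk : forall k, c <= al * (pt k).1 + be * (pt k).2 /\
    (al * (pt k).1 + be * (pt k).2 = c -> sg * Y <= sg * (pt k).2).
  move=> k; have [i [j [nz [hi hj]]]] := LU k; have [c1 c2] := Hg _ _ nz.
  have a1 : al * i%:R <= al * (pt k).1 by rewrite ler_wpM2l.
  have b1 : be * j%:R <= be * (pt k).2 by rewrite ler_wpM2l // ltW.
  split; first by move: c1; rewrite /phi; lra.
  move=> e; have e1 : phi al be i j = c by move: c1; rewrite /phi; lra.
  have e2 : be * j%:R = be * (pt k).2 by move: c1; rewrite /phi; lra.
  by have := c2 e1; rewrite (mulfI hb0 e2).
have Sc : c = \sum_k lam k * c by rewrite -mulr_suml L1 mul1r.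
split.
  rewrite Ephi {1}Sc; apply: ler_sum => k _; apply: ler_wpM2l => //; exact: (Hk k).1.
move=> e.
have Z : forall k, lam k * (al * (pt k).1 + be * (pt k).2 - c) = 0.
  have : \sum_k lam k * (al * (pt k).1 + be * (pt k).2 - c) = 0.
    under eq_bigr do rewrite mulrBr.
    by rewrite sumrB -Ephi -Sc e subrr.
  move/psumr_eq0P => H k; apply: H => // k' _; apply: mulr_ge0 => //.
  rewrite subr_ge0; exact: (Hk k').1.
rewrite E2 mulr_sumr.
have SY : sg * Y = \sum_k lam k * (sg * Y) by rewrite -mulr_suml L1 mul1r.
rewrite SY; apply: ler_sum => k _; rewrite [sg * (_ * _)]mulrCA.
have [->|nz] := eqVneq (lam k) 0; first by rewrite !mul0r.
apply: ler_wpM2l => //; apply: (Hk k).2.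
by move/eqP: (Z k); rewrite mulf_eq0 (negbTE nz) /= subr_eq0 => /eqP.
Qed.

Lemma vertex_bound {R : realType} (K : R * R -> Prop) (al be sg c : R) (v : R * R) :
  0 < al -> 0 < be -> sg != 0 ->
  (forall u, K u -> c <= al * u.1 + be * u.2 /\ (al * u.1 + be * u.2 = c -> sg * v.2 <= sg * u.2)) ->
  K v -> al * v.1 + be * v.2 = c -> vertex K v.
Proof.
move=> Hal Hbe Hsg H Kv ev; split => // -[a1 a2] [b1 b2] t Ka Kb t0 t1 /= e1 e2.
have [A1 A2] := H _ Ka; have [B1 B2] := H _ Kb; rewrite /= in A1 A2 B1 B2.
have ef : c = t * (al * a1 + be * a2) + (1 - t) * (al * b1 + be * b2) by rewrite -ev e1 e2; ring.
move: A1 B1 ef; set xa := al * a1 + be * a2; set xb := al * b1 + be * b2 => A1 B1 ef.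
have ea : xa = c by nra.
have eb : xb = c by nra.
have ya := A2 ea; have yb := B2 eb.
have ey : sg * v.2 = t * (sg * a2) + (1 - t) * (sg * b2) by rewrite e2; ring.
move: ya yb ey; set ya := sg * a2; set yb := sg * b2 => hya hyb ey.
have ya' : ya = sg * v.2 by nra.
have yb' : yb = sg * v.2 by nra.
have a2v := mulfI Hsg ya'; have b2v := mulfI Hsg yb'.
have : al * a1 = al * b1 by move: ea eb; rewrite /xa /xb a2v b2v; lra.
have hal0 : al != 0 by rewrite gt_eqF.
move/(mulfI hal0) => ->; by rewrite a2v b2v.
Qed.

Lemma lead_vertex {R : realType} (g : ps2 R) (al be sg : R) X Y :
  0 < al -> 0 < be -> sg != 0 -> Lead g al be sg X Y -> vertex (newton_polygon g) (pt R X Y).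
Proof.
move=> Hal Hbe Hsg [nz HL].
apply: (vertex_bound (c := phi al be X Y) Hal Hbe Hsg).
- apply: hull_bound; [exact: ltW| exact: Hbe|] => i j /HL [h1 h2]; split => // e; exact: h2.
- by apply: hull_quad; exists X, Y; split => //.
- by [].
Qed.

Lemma between {R : realType} (g : ps2 R) (al be : R) (A B V : R * R) :
  0 < al -> 0 < be -> newton_polygon g A -> newton_polygon g B ->
  A.1 < V.1 -> V.1 < B.1 -> al * A.1 + be * A.2 <= al * V.1 + be * V.2 ->
  al * B.1 + be * B.2 <= al * V.1 + be * V.2 -> ~ vertex (newton_polygon g) V.
Proof.
move=> Hal Hbe KA KB h1 h2 pA pB [KV HV].
pose t := (B.1 - V.1) / (B.1 - A.1).
have dpos : 0 < B.1 - A.1 by lra.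
have t0 : 0 < t by apply: divr_gt0; lra.
have t1 : t < 1 by rewrite /t ltr_pdivrMr //; lra.
have ex : V.1 = t * A.1 + (1 - t) * B.1.
  rewrite /t; field; lra.
pose P := (t * A.1 + (1 - t) * B.1, t * A.2 + (1 - t) * B.2).
have KP : newton_polygon g P by apply: hull_conv => //; lra.
have hP : P.2 <= V.2.
  have : be * P.2 <= be * V.2 by rewrite /P /=; nra.
  by rewrite ler_pM2l.
have [e|nz] := eqVneq P.2 V.2.
  have := HV A B t KA KB t0 t1 ex (esym e); move=> eAB; move: h1 h2; rewrite eAB; lra.
pose h := V.2 - P.2.
have hpos : 0 < h by rewrite /h subr_gt0 lt_neqAle nz hP.
have KP' : newton_polygon g (P.1 + 0, P.2 + 2 * h) by apply: hull_up => //; lra.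
have := HV P (P.1 + 0, P.2 + 2 * h) (1/2) KP KP'.
have hlf0 : (0 : R) < 1/2 by lra.
have hlf1 : (1/2 : R) < 1 by lra.
move=> /(_ hlf0 hlf1) H.
have E : P = (P.1 + 0, P.2 + 2 * h).
  apply: H; rewrite /P /= -?ex; first by ring.
  have hE : h = V.2 - P.2 by []. rewrite hE /P /=. clear. generalize (A.2) (B.2) (V.2) t => x y z u. by field.
have : P.2 = P.2 + 2 * h by rewrite {1}E.
lra.
Qed.

Lemma lead_hull {R : realType} (g : ps2 R) (al be sg : R) X Y :
  0 <= al -> 0 < be -> Lead g al be sg X Y -> forall v, newton_polygon g v ->
  phi al be X Y <= al * v.1 + be * v.2 /\
  (al * v.1 + be * v.2 = phi al be X Y -> sg * Y%:R <= sg * v.2).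
Proof.
move=> Hal Hbe [nz HL]; apply: hull_bound => // i j /HL [h1 h2]; split => // e; exact: h2.
Qed.


Lemma ex_min (P : nat -> Prop) : (exists n, P n) -> exists n, P n /\ forall m, P m -> (n <= m)%N.
Proof.
move=> [n Pn]; apply: NNPP => H.
suff : forall N m, (m <= N)%N -> ~ P m by move/(_ n n (leqnn n)).
elim=> [|N IH] m Hm Pm.
  apply: H; exists m; split => // m' _; by rewrite (leq_trans Hm).
case: (ltnP m N.+1) => [lt|ge]; first by apply: (IH m) => //.
apply: H; exists m; split => // m' Pm'; rewrite leqNgt; apply/negP => lt.
by apply: (IH m') => //; rewrite -ltnS (leq_trans lt).
Qed.

Lemma ex_max (P : nat -> Prop) B : (exists n, P n) -> (forall n, P n -> (n <= B)%N) ->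
  exists n, P n /\ forall m, P m -> (m <= n)%N.
Proof.
move=> [n Pn] HB.
have [k [[n0 [Pn0 ->]] Hk]] := @ex_min (fun k => exists n, P n /\ k = (B - n)%N) (ex_intro _ _ (ex_intro _ n (conj Pn erefl))).
exists n0; split => // m Pm.
have := Hk _ (ex_intro _ m (conj Pm erefl)).
have := HB _ Pm; have := HB _ Pn0; lia.
Qed.

Lemma phi_nat {R : realType} (Am An i j : nat) :
  phi (Am%:R : R) An%:R i j = (Am * i + An * j)%N%:R.
Proof. by rewrite /phi natrD !natrM. Qed.

Lemma lead_exists {R : realType} (q : ps2 R) (Am An : nat) (b : bool) :
  (0 < Am)%N -> (0 < An)%N -> (exists i j, q i j != 0) ->
  exists X Y, Lead q (Am%:R) (An%:R) (if b then 1 else -1) X Y.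
Proof.
move=> HAm HAn [i0 [j0 nz0]].
have [n0 [[X0 [Y0 [nzX0 e0]]] Hmin]] := @ex_min (fun n => exists i j, q i j != 0 /\ (Am * i + An * j)%N = n)
  (ex_intro _ _ (ex_intro _ i0 (ex_intro _ j0 (conj nz0 erefl)))).
pose P2 y := exists i, q i y != 0 /\ (Am * i + An * y)%N = n0.
have P2Y0 : P2 Y0 by exists X0.
have gen : forall Y, P2 Y -> (forall j i, q i j != 0 -> (Am * i + An * j)%N = n0 ->
     (if b then 1 else -1) * Y%:R <= (if b then 1 else -1) * (j%:R : R)) ->
     exists X Y, Lead q (Am%:R) (An%:R) (if b then 1 else -1) X Y.
  move=> Y [X [nzX eX]] HY; exists X, Y; split => // i j nz.
  rewrite !phi_nat eX ler_nat; split; first by apply: Hmin; exists i, j.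
  by move/natr_eq => e; apply: HY nz e.
case: b gen => gen.
  have [Y [PY HY]] := @ex_min P2 (ex_intro _ _ P2Y0); apply: (gen Y PY) => j i nz e.
  by rewrite !mul1r ler_nat; apply: HY; exists i.
have bnd : forall y, P2 y -> (y <= n0)%N.
  by move=> y [i [_ e]]; move: e HAn; nia.
have [Y [PY HY]] := @ex_max P2 n0 (ex_intro _ _ P2Y0) bnd.
apply: (gen Y PY) => j i nz e.
by rewrite !mulN1r lerN2 ler_nat; apply: HY; exists i.
Qed.

Lemma mono_lt (s : nat) (nv mv : nat -> nat) :
  (forall i, (1 <= i)%N -> (i < s)%N -> (nv i < nv i.+1)%N /\ (mv i.+1 < mv i)%N) ->
  forall a b, (1 <= a)%N -> (a < b)%N -> (b <= s)%N -> (nv a < nv b)%N /\ (mv b < mv a)%N.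
Proof.
move=> H a b Ha; elim: b => [//|b IH] Hab Hb.
have [n1 m1] := H b (leq_trans Ha (ltnSE Hab)) Hb.
case: (ltnP a b) => [lt|ge].
  have [n2 m2] := IH lt (ltnW Hb); split; [exact: ltn_trans n2 n1| exact: ltn_trans m1 m2].
have -> : a = b by apply/eqP; rewrite eqn_leq ge ltnSE.
by [].
Qed.

Lemma edgeE {R : realType} (q : ps2 R) s nv mv j :
  (exists i j, q i j != 0) ->
  (forall v, vertex (newton_polygon q) v <-> exists2 i, (1 <= i <= s)%N & v = pt R (nv i) (mv i)) ->
  (forall i, (1 <= i)%N -> (i < s)%N -> (nv i < nv i.+1)%N /\ (mv i.+1 < mv i)%N) ->
  (1 <= j)%N -> (j < s)%N ->
  Lead q (mv j - mv j.+1)%N%:R (nv j.+1 - nv j)%N%:R (-1) (nv j) (mv j) /\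
  Lead q (mv j - mv j.+1)%N%:R (nv j.+1 - nv j)%N%:R 1 (nv j.+1) (mv j.+1).
Proof.
move=> Hnz Hvert Hmono Hj1 Hjs.
have [nj mj] := Hmono j Hj1 Hjs.
set Am := (mv j - mv j.+1)%N; set An := (nv j.+1 - nv j)%N.
have HAm : (0 < Am)%N by rewrite subn_gt0.
have HAn : (0 < An)%N by rewrite subn_gt0.
have al0 : (0 : R) < Am%:R by rewrite ltr0n.
have be0 : (0 : R) < An%:R by rewrite ltr0n.
have eqj : phi (R:=R) Am%:R An%:R (nv j.+1) (mv j.+1) = phi Am%:R An%:R (nv j) (mv j).
  rewrite /phi /Am /An !natrB ?(ltnW nj) ?(ltnW mj) //; ring.
have Kv : forall i, (1 <= i <= s)%N -> newton_polygon q (pt R (nv i) (mv i)).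
  by move=> i Hi; have [] := (Hvert (pt R (nv i) (mv i))).2 (ex_intro2 _ _ i Hi erefl).
have Vv : forall i, (1 <= i <= s)%N -> vertex (newton_polygon q) (pt R (nv i) (mv i)).
  by move=> i Hi; apply: (Hvert _).2; exists i.
have Hj : (1 <= j <= s)%N by rewrite Hj1 ltnW.
have Hj' : (1 <= j.+1 <= s)%N by rewrite Hjs andbT.
have main : forall bb : bool, exists i, (1 <= i <= s)%N /\ (i = j \/ i = j.+1) /\
     Lead q (Am%:R) (An%:R) (if bb then 1 else -1) (nv i) (mv i).
  move=> bb; have [X [Y L]] := lead_exists bb HAm HAn Hnz.
  have sg0 : (if bb then 1 else -1 : R) != 0 by case: (bb); rewrite ?oppr_eq0 oner_eq0.
  have := lead_vertex al0 be0 sg0 L; move/Hvert => [i Hi E].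
  case: E => /natr_eq eX /natr_eq eY; rewrite eX eY in L.
  exists i; split => //; split => //.
  have [L0 LH] := L.
  have hb := hull_bound (c := phi Am%:R An%:R (nv i) (mv i)) (sg := 0) (Y := 0) (ltW al0) be0.
  have hb' : forall v, newton_polygon q v -> phi Am%:R An%:R (nv i) (mv i) <= Am%:R * v.1 + An%:R * v.2.
    move=> v Kv'; apply: (hb q _ v Kv').1 => i' j' /LH [h1 _]; split => // _; by rewrite !mul0r.
  have cj := hb' _ (Kv j Hj); have cj1 := hb' _ (Kv j.+1 Hj'); rewrite /= in cj cj1.
  case: (ltngtP i j) => [lt|gt|->]; last by left.
    exfalso; have [n1 _] := mono_lt Hmono (andP Hi).1 lt (ltnW Hjs).
    have [n2 _] := mono_lt Hmono Hj1 (ltnSn j) Hjs.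
    apply: (between al0 be0 (Kv i Hi) (Kv j.+1 Hj') _ _ _ _ (Vv j Hj)) => /=.
    - by rewrite ltr_nat.
    - by rewrite ltr_nat.
    - exact: cj.
    - by move: eqj; rewrite /phi => ->.
  case: (ltngtP i j.+1) => [lt'|gt'|->]; last by right.
    by move: gt; rewrite ltnNge -ltnS lt'.
  exfalso; have [n1 _] := mono_lt Hmono (leq_trans Hj1 (leqnSn j)) gt' (andP Hi).2.
  apply: (between al0 be0 (Kv j Hj) (Kv i Hi) _ _ _ _ (Vv j.+1 Hj')) => /=.
  - by rewrite ltr_nat.
  - by rewrite ltr_nat.
  - by move: eqj; rewrite /phi => ->.
  - exact: cj1.
have [i1 [_ [Hi1 L1]]] := main false.
have [i2 [_ [Hi2 L2]]] := main true.
split.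
  case: Hi1 L1 => -> // L1; exfalso.
  have [_ h] := lead_hull (ltW al0) be0 L1 (Kv j Hj).
  have := h (esym eqj); rewrite /= !mulN1r lerN2 ler_nat; rewrite leqNgt mj //.
case: Hi2 L2 => -> // L2; exfalso.
have [_ h] := lead_hull (ltW al0) be0 L2 (Kv j.+1 Hj').
have := h eqj; rewrite /= !mul1r ler_nat; rewrite leqNgt mj //.
Qed.


Lemma gsumS a b n : gsum a b n.+1 = (a ^ n + b * gsum a b n)%N.
Proof.
rewrite /gsum big_ord_recl /= subn0 expn0 muln1; congr (_ + _)%N.
rewrite big_distrr /=; apply: eq_bigr => i _.
have -> : (n - bump 0 i = n.-1 - i)%N by rewrite /bump /=; lia.
by rewrite /bump /= expnS mulnCA.
Qed.

Lemma gsum0 a b : gsum a b 0 = 0%N.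
Proof. by rewrite /gsum big_ord0. Qed.

Lemma lead_Xz {R : realType} (al be sg : R) : Lead (@Xz R) al be sg 1 0.
Proof.
split; first by rewrite /Xz /= oner_neq0.
move=> i j; rewrite /Xz; case: (i == 1%N) / eqP => [->|]; case: (j == 0%N) / eqP => [->|] //=;
  by rewrite eqxx.
Qed.

Lemma lead_Xw {R : realType} (al be sg : R) : Lead (@Xw R) al be sg 0 1.
Proof.
split; first by rewrite /Xw /= oner_neq0.
move=> i j; rewrite /Xw; case: (i == 0%N) / eqP => [->|]; case: (j == 1%N) / eqP => [->|] //=;
  by rewrite eqxx.
Qed.

Lemma fiterS {R : realType} (p : ps1 R) q n :
  fiter p q n.+1 = (comp2 (lift1 p) (fiter p q n).1 (fiter p q n).2, comp2 q (fiter p q n).1 (fiter p q n).2).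
Proof. by []. Qed.

Lemma stepP {R : realType} (p : ps1 R) (P S : ps2 R) (al be sg : R) delta N XS YS :
  0 < al -> 0 <= be -> sg != 0 -> (1 <= delta)%N -> (forall i, (i < delta)%N -> p i = 0) -> p delta != 0 ->
  Lead P al be sg (delta ^ N) 0 -> Lead S al be sg XS YS -> (0 < XS + YS)%N ->
  Lead (comp2 (lift1 p) P S) al be sg (delta ^ N.+1) 0.
Proof.
move=> Hal Hbe Hsg Hd Hp0 Hpd LP LS HS.
have cP0 : 0 < phi al be (delta ^ N) 0 by rewrite /phi mulr0 addr0 mulr_gt0 // ltr0n expn_gt0 Hd.
have := comp2_lead (a0 := delta) (b0 := 0) (q := lift1 p) (negbT (gt_eqF Hal)) Hsg LP LS _ HS.
rewrite mul0n addn0 muln0 addn0 -expnS; apply => //.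
  by rewrite expn_gt0 Hd.
move=> a b; rewrite /lift1; case: (b == 0%N) / eqP => [->|_]; last by rewrite eqxx.
move=> pa.
have da : (delta <= a)%N by rewrite leqNgt; apply/negP => /Hp0 e; rewrite e eqxx in pa.
rewrite !mul0r !addr0 !mulr0; split; first by rewrite ler_pM2r // ler_nat.
move=> e; split => // _; split => //.
by apply: natr_eq; apply: (mulIf (negbT (gt_eqF cP0))).
Qed.

Lemma phi_gs {R : realType} (al be : R) delta a0 b0 :
  phi al be a0 b0 = be * delta%:R ->
  forall n, phi al be (gsum delta b0 n * a0) (b0 ^ n) = be * (delta ^ n)%:R.
Proof.
move=> H; elim=> [|n IH]; first by rewrite gsum0 /phi !expn0 mul0n mulr0 add0r.
move: H IH; rewrite /phi gsumS mulnDl !natrD !natrM !expnS !natrM => H IH.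
have -> : al * ((delta ^ n)%:R * a0%:R + (b0%:R * (gsum delta b0 n)%:R) * a0%:R) +
  be * (b0%:R * (b0 ^ n)%:R) = (delta ^ n)%:R * (al * a0%:R) +
  b0%:R * (al * ((gsum delta b0 n)%:R * a0%:R) + be * (b0 ^ n)%:R) by ring.
rewrite IH.
have -> : al * a0%:R = be * delta%:R - be * b0%:R by rewrite -H; ring.
ring.
Qed.

Lemma edge_ind {R : realType} (p : ps1 R) (q : ps2 R) (al be sg : R) delta a0 b0 :
  0 < al -> 0 < be -> sg != 0 -> (1 <= delta)%N -> (forall i, (i < delta)%N -> p i = 0) -> p delta != 0 ->
  Lead q al be sg a0 b0 -> phi al be a0 b0 = be * delta%:R -> (0 < b0)%N ->
  forall n, Lead (fiter p q n).1 al be sg (delta ^ n) 0 /\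
            Lead (fiter p q n).2 al be sg (gsum delta b0 n * a0) (b0 ^ n).
Proof.
move=> Hal Hbe Hsg Hd Hp0 Hpd Lq Hphi Hb0.
have al0 : al != 0 by rewrite gt_eqF.
have [q0 Lq'] := Lq.
elim=> [|n [LP LS]].
  by rewrite /= gsum0 mul0n; split; [exact: lead_Xz | exact: lead_Xw].
have HS : (0 < gsum delta b0 n * a0 + b0 ^ n)%N by rewrite addn_gt0 expn_gt0 Hb0 orbT.
rewrite fiterS /=; split; first exact: stepP (ltW Hbe) Hsg Hd Hp0 Hpd LP LS HS.
have -> : (gsum delta b0 n.+1 * a0 = a0 * delta ^ n + b0 * (gsum delta b0 n * a0))%N.
  by rewrite gsumS mulnDl [(delta ^ n * a0)%N]mulnC mulnA.
have -> : (b0 ^ n.+1 = a0 * 0 + b0 * b0 ^ n)%N by rewrite muln0 add0n expnS.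
apply: (comp2_lead al0 Hsg LP LS) => //; first by rewrite addn0 expn_gt0 Hd.
move=> a b qab.
have [c1 c2] := Lq' _ _ qab.
have Dp : (0 : R) < (delta ^ n)%:R by rewrite ltr0n expn_gt0 Hd.
have Bp : (0 : R) < (b0 ^ n)%:R by rewrite ltr0n expn_gt0 Hb0.
have cS : phi al be (gsum delta b0 n * a0) (b0 ^ n) = be * (delta ^ n)%:R by exact: phi_gs.
have cP : phi al be (delta ^ n) 0 = al * (delta ^ n)%:R by rewrite /phi mulr0 addr0.
rewrite cS cP.
have E : forall x y : nat, x%:R * (al * (delta ^ n)%:R) + y%:R * (be * (delta ^ n)%:R) =
   (delta ^ n)%:R * phi al be x y by move=> x y; rewrite /phi; ring.
rewrite !E; split; first by rewrite ler_pM2l.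
move/(mulfI (negbT (gt_eqF Dp))) => e.
have sb := c2 e.
have Z : sg * (0%N)%:R = 0 :> R by rewrite mulr0.
rewrite Z !mulr0 !add0r.
have E2 : forall y : nat, y%:R * (sg * (b0 ^ n)%:R) = (b0 ^ n)%:R * (sg * y%:R) by move=> y; ring.
rewrite !E2; split; first by rewrite ler_pM2l.
move/(mulfI (negbT (gt_eqF Bp)))/(mulfI Hsg)/natr_eq => bb.
split => //; move: e; rewrite /phi bb => e.
have : al * a%:R = al * a0%:R by lra.
by move/(mulfI al0)/natr_eq.
Qed.

Lemma cone_ind {R : realType} (p : ps1 R) (q : ps2 R) (al be sg : R) delta gam d (Xn Yn : nat -> nat) :
  0 < al -> 0 <= be -> sg != 0 -> (1 <= delta)%N -> (forall i, (i < delta)%N -> p i = 0) -> p delta != 0 ->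
  q gam d != 0 ->
  Lead (fiter p q 1).1 al be sg delta 0 -> Lead (fiter p q 1).2 al be sg (Xn 1%N) (Yn 1%N) ->
  (forall n, (1 <= n)%N -> (0 < Xn n + Yn n)%N) ->
  (forall n, (1 <= n)%N -> Xn n.+1 = (gam * delta ^ n + d * Xn n)%N /\ Yn n.+1 = (gam * 0 + d * Yn n)%N) ->
  (forall n, (1 <= n)%N -> forall a b, q a b != 0 ->
     gam%:R * phi al be (delta ^ n) 0 + d%:R * phi al be (Xn n) (Yn n) <=
       a%:R * phi al be (delta ^ n) 0 + b%:R * phi al be (Xn n) (Yn n) /\
     (a%:R * phi al be (delta ^ n) 0 + b%:R * phi al be (Xn n) (Yn n) =
       gam%:R * phi al be (delta ^ n) 0 + d%:R * phi al be (Xn n) (Yn n) -> a = gam /\ b = d)) ->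
  forall n, (1 <= n)%N -> Lead (fiter p q n).1 al be sg (delta ^ n) 0 /\
            Lead (fiter p q n).2 al be sg (Xn n) (Yn n).
Proof.
move=> Hal Hbe Hsg Hd Hp0 Hpd qgd LP1 LS1 HXY Hrec Hu.
have al0 : al != 0 by rewrite gt_eqF.
elim=> [//|n IH] Hn.
case: n IH Hn => [|n] IH _; first by rewrite expn1; split.
have [LP LS] := IH isT.
rewrite fiterS /=; split; first exact: stepP Hal Hbe Hsg Hd Hp0 Hpd LP LS (HXY n.+1 isT).
have [-> ->] := Hrec n.+1 isT.
apply: (comp2_lead al0 Hsg LP LS) => //; first by rewrite addn0 expn_gt0 Hd.
  exact: HXY.
move=> a b qab; have [h1 h2] := Hu n.+1 isT _ _ qab; split => // e.
by have [-> ->] := h2 e; split.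
Qed.


Lemma finish {R : realType} (g : ps2 R) (al be : R) X1 Y1 X2 Y2 :
  0 < al -> 0 < be -> Lead g al be (-1) X1 Y1 -> Lead g al be 1 X2 Y2 ->
  phi al be X2 Y2 = phi al be X1 Y1 -> (X1 < X2)%N ->
  next_vertex (newton_polygon g) (pt R X1 Y1) (pt R X2 Y2) /\
  slope (pt R X1 Y1) (pt R X2 Y2) = - (al / be) /\
  yintercept (pt R X1 Y1) (pt R X2 Y2) = phi al be X1 Y1 / be.
Proof.
move=> Hal Hbe L1 L2 E lt.
have s1 : (-1 : R) != 0 by rewrite oppr_eq0 oner_eq0.
have s2 : (1 : R) != 0 by rewrite oner_eq0.
have ltR : (X1%:R : R) < X2%:R by rewrite ltr_nat.
have sl : slope (pt R X1 Y1) (pt R X2 Y2) = - (al / be).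
  rewrite /slope /pt /=; move: E; rewrite /phi => E.
  have nz : (X2%:R - X1%:R : R) != 0 by rewrite subr_eq0 gt_eqF.
  have be0 : be != 0 by rewrite gt_eqF.
  have eY : (Y2%:R : R) = Y1%:R - al / be * (X2%:R - X1%:R).
    apply: (mulfI be0).
    have -> : be * (Y1%:R - al / be * (X2%:R - X1%:R)) = be * Y1%:R - al * (X2%:R - X1%:R) by field.
    lra.
  by rewrite eY; field; rewrite be0 nz.
split; last split => //.
  split; first exact: lead_vertex Hal Hbe s1 L1.
  split; first exact: lead_vertex Hal Hbe s2 L2.
  split; first by rewrite /pt /=.
  move=> V [KV HV] [a1 a2].
  apply: (between Hal Hbe _ _ a1 a2 _ _ (conj KV HV)).
  - by apply: hull_quad; exists X1, Y1; have [h _] := L1; split => //=.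
  - by apply: hull_quad; exists X2, Y2; have [h _] := L2; split => //=.
  - exact: (lead_hull (ltW Hal) Hbe L1 KV).1.
  - rewrite /pt /=; have := (lead_hull (ltW Hal) Hbe L1 KV).1; move: E; rewrite /phi => ->; by [].
rewrite /yintercept sl /pt /phi /=; field; by rewrite (gt_eqF Hbe).
Qed.

Lemma yint_phi {R : realType} x1 y1 x2 y2 : (x1 < x2)%N -> (y2 < y1)%N ->
  yintercept (pt R x1 y1) (pt R x2 y2) = phi (y1 - y2)%N%:R (x2 - x1)%N%:R x1 y1 / (x2 - x1)%N%:R.
Proof.
move=> hx hy; rewrite /yintercept /slope /pt /phi /= !natrB ?(ltnW hx) ?(ltnW hy) //.
have : (x1%:R : R) < x2%:R by rewrite ltr_nat.
move=> h; field; lra.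
Qed.

Lemma coneQ {R : realType} (q : ps2 R) (al be al1 be1 u v : R) gam d :
  0 < al -> Lead q al be (-1) gam d -> Lead q al1 be1 1 gam d ->
  al * be1 < al1 * be -> v * al < u * be -> u * be1 < v * al1 ->
  forall a b, q a b != 0 ->
    gam%:R * u + d%:R * v <= a%:R * u + b%:R * v /\
    (a%:R * u + b%:R * v = gam%:R * u + d%:R * v -> a = gam /\ b = d).
Proof.
move=> Hal [_ H2] [_ H1] hc hS hT a b nz.
have [p2 e2] := H2 a b nz; have [p1 e1] := H1 a b nz.
have Hdet : 0 < al1 * be - al * be1 by lra.
have HS : 0 < u * be - v * al by lra.
have HT : 0 < v * al1 - u * be1 by lra.
have key : (al1 * be - al * be1) * (a%:R * u + b%:R * v - (gam%:R * u + d%:R * v)) =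
  (u * be - v * al) * (phi al1 be1 a b - phi al1 be1 gam d) +
  (v * al1 - u * be1) * (phi al be a b - phi al be gam d) by rewrite /phi; ring.
move: key; set x := phi al1 be1 a b - phi al1 be1 gam d; set y := phi al be a b - phi al be gam d.
move=> key.
have x0 : 0 <= x by rewrite subr_ge0.
have y0 : 0 <= y by rewrite subr_ge0.
have Sx : 0 <= (u * be - v * al) * x by apply: mulr_ge0 => //; exact: ltW.
have Ty : 0 <= (v * al1 - u * be1) * y by apply: mulr_ge0 => //; exact: ltW.
split.
  rewrite -subr_ge0; rewrite -(pmulr_rge0 _ Hdet) key; lra.
move=> e.
have : (u * be - v * al) * x + (v * al1 - u * be1) * y = 0 by rewrite -key e subrr mulr0.
move=> z.
have zx : (u * be - v * al) * x = 0 by lra.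
have zy : (v * al1 - u * be1) * y = 0 by lra.
move/eqP: zx; rewrite mulf_eq0 (gt_eqF HS) /= subr_eq0 => /eqP ex.
move/eqP: zy; rewrite mulf_eq0 (gt_eqF HT) /= subr_eq0 => /eqP ey.
have := e1 ex; have := e2 ey; rewrite !mul1r !mulN1r lerN2 !ler_nat => h1 h2.
have bd : b = d by apply/eqP; rewrite eqn_leq h1 h2.
split => //; move: ey; rewrite /phi bd => ey.
have : al * a%:R = al * gam%:R by lra.
by move/(mulfI (negbT (gt_eqF Hal)))/natr_eq.
Qed.

Lemma base1 {R : realType} (p : ps1 R) (q : ps2 R) (al be sg : R) delta a0 b0 :
  0 < al -> 0 < be -> sg != 0 -> (1 <= delta)%N -> (forall i, (i < delta)%N -> p i = 0) -> p delta != 0 ->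
  Lead q al be sg a0 b0 ->
  Lead (fiter p q 1).1 al be sg delta 0 /\ Lead (fiter p q 1).2 al be sg a0 b0.
Proof.
move=> Hal Hbe Hsg Hd Hp0 Hpd Lq.
have al0 : al != 0 by rewrite gt_eqF.
have [q0 Lq'] := Lq.
rewrite fiterS /=.
have LP := @lead_Xz R al be sg; have LS := @lead_Xw R al be sg.
split; first by have := stepP Hal (ltW Hbe) Hsg Hd Hp0 Hpd (N := 0) (XS := 0) (YS := 1); rewrite expn0 expn1; apply.
have := comp2_lead (a0 := a0) (b0 := b0) al0 Hsg LP LS isT isT q0.
rewrite !muln1 !muln0 addn0 add0n; apply.
move=> a b qab; have [c1 c2] := Lq' _ _ qab.
have E : forall x y : nat, x%:R * phi al be 1 0 + y%:R * phi al be 0 1 = phi al be x y.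
  by move=> x y; rewrite /phi; ring.
rewrite !E; split => // e.
have E2 : forall x y : nat, x%:R * (sg * (0%N)%:R) + y%:R * (sg * (1%N)%:R) = sg * y%:R :> R.
  by move=> x y; ring.
rewrite !E2; split; first exact: c2 e.
move/(mulfI Hsg)/natr_eq => bb; split => //.
move: e; rewrite /phi -bb => e.
have : al * a%:R = al * a0%:R by lra.
by move/(mulfI al0)/natr_eq.
Qed.

Unset Implicit Arguments. Set Strict Implicit.


Theorem proposition6 (R : realType) (p : ps1 R) (q : ps2 R) (delta : nat)
  (s : nat) (nv mv : nat -> nat) (k : nat) :
  (* p(z) = a_delta z^delta + O(z^(delta+1)), a_delta <> 0, delta >= 1 *)
  (1 <= delta)%N -> (forall i, (i < delta)%N -> p i = 0) -> p delta != 0 ->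
  convergent1 p ->
  (* q holomorphic, q(0,0) = 0, q not identically zero *)
  convergent2 q -> q 0%N 0%N = 0 -> (exists i j, q i j != 0) ->
  (* (n_1,m_1),...,(n_s,m_s) are the vertices of N(q), n increasing, m decreasing *)
  (forall v, vertex (newton_polygon q) v <->
     exists2 i, (1 <= i <= s)%N & v = pt R (nv i) (mv i)) ->
  (forall i, (1 <= i)%N -> (i < s)%N -> (nv i < nv i.+1)%N /\ (mv i.+1 < mv i)%N) ->
  (* Case 4 with index k *)
  (2 < s)%N -> (2 <= k)%N -> (k <= s.-1)%N ->
  yintercept (pt R (nv k) (mv k)) (pt R (nv k.+1) (mv k.+1)) <= delta%:R ->
  delta%:R <= yintercept (pt R (nv k.-1) (mv k.-1)) (pt R (nv k) (mv k)) ->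
  let gamma := nv k in let d := mv k in
  let l1 : R := ((nv k)%:R - (nv k.-1)%:R) / ((mv k.-1)%:R - (mv k)%:R) in
  let l2 : R := ((nv k.+1)%:R - (nv k)%:R) / ((mv k)%:R - (mv k.+1)%:R) - l1 in
  let Cc := nv k.+1 in let Dc := mv k.+1 in
  let gamma_n n := (gamma * gsum delta d n)%N in
  let C_n n : R := (gamma_n n)%:R - (gamma%:R - Cc%:R) * (d ^ n.-1)%:R in
  let D_n n : R := (Dc * d ^ n.-1)%:R in
  let Cs_n n : R := (gsum delta Dc n * Cc)%:R in
  let Ds_n n : R := (Dc ^ n)%:R in
  let T_k := yintercept (pt R (nv k) (mv k)) (pt R (nv k.+1) (mv k.+1)) in
  (* (i) *)
  (T_k < delta%:R ->
   forall n, (1 <= n)%N ->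
     next_vertex (newton_polygon (Qn p q n)) (pt R (gamma_n n) (d ^ n))
                 (C_n n, D_n n) /\
     slope (pt R (gamma_n n) (d ^ n)) (C_n n, D_n n) = - (l1 + l2)^-1 /\
     yintercept (pt R (gamma_n n) (d ^ n)) (C_n n, D_n n) < (delta ^ n)%:R) /\
  (* (ii) *)
  (T_k = delta%:R -> (0 < mv k.+1)%N ->
   forall n, (1 <= n)%N ->
     next_vertex (newton_polygon (Qn p q n)) (pt R (gamma_n n) (d ^ n))
                 (Cs_n n, Ds_n n) /\
     slope (pt R (gamma_n n) (d ^ n)) (Cs_n n, Ds_n n) = - (l1 + l2)^-1 /\
     yintercept (pt R (gamma_n n) (d ^ n)) (Cs_n n, Ds_n n) = (delta ^ n)%:R).
Proof.
move=> Hd Hp0 Hpd _ _ _ Hnz Hvert Hmono Hs Hk2 Hks HTk HTk1.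
have k1 : (1 <= k)%N by apply: ltnW.
have ks : (k < s)%N by move: Hks Hs; lia.
have k1' : (1 <= k.-1)%N by move: Hk2; lia.
have ks' : (k.-1 < s)%N by move: ks; lia.
have pk : k.-1.+1 = k by rewrite prednK.
have [Lk Lk'] := edgeE Hnz Hvert Hmono k1 ks.
have [Lj Lj'] := edgeE Hnz Hvert Hmono k1' ks'; rewrite pk in Lj Lj'.
have [nk mk] := Hmono k k1 ks.
have [nk1 mk1] := Hmono k.-1 k1' ks'; rewrite pk in nk1 mk1.
move: Lk Lk' Lj Lj'.
set al : R := (mv k - mv k.+1)%N%:R; set be : R := (nv k.+1 - nv k)%N%:R.
set al1 : R := (mv k.-1 - mv k)%N%:R; set be1 : R := (nv k - nv k.-1)%N%:R.
move=> Lk Lk' Lj Lj'.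
have al0 : 0 < al by rewrite ltr0n subn_gt0.
have be0 : 0 < be by rewrite ltr0n subn_gt0.
have al10 : 0 < al1 by rewrite ltr0n subn_gt0.
have be10 : 0 < be1 by rewrite ltr0n subn_gt0.
have eqk : phi al be (nv k.+1) (mv k.+1) = phi al be (nv k) (mv k).
  rewrite /phi /al /be !natrB ?(ltnW nk) ?(ltnW mk) //; ring.
have eqk1 : phi al1 be1 (nv k.-1) (mv k.-1) = phi al1 be1 (nv k) (mv k).
  rewrite /phi /al1 /be1 !natrB ?(ltnW nk1) ?(ltnW mk1) //; ring.
rewrite (yint_phi (R:=R) nk mk) -/al -/be in HTk.
rewrite (yint_phi (R:=R) nk1 mk1) -/al1 -/be1 eqk1 in HTk1.
have hT : phi al be (nv k) (mv k) <= be * delta%:R by rewrite -ler_pdivrMl // mulrC.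
have hT1 : be1 * delta%:R <= phi al1 be1 (nv k) (mv k) by rewrite -ler_pdivlMl // mulrC.
have conv : al * be1 < al1 * be.
  have [q1 _] := Lj; have [_ Hk] := Lk; have [c1 c2] := Hk _ _ q1.
  have c3 : phi al be (nv k) (mv k) < phi al be (nv k.-1) (mv k.-1).
    rewrite lt_neqAle c1 andbT; apply/negP => /eqP e.
    have := c2 (esym e); rewrite !mulN1r lerN2 ler_nat leqNgt mk1 //.
  move: c3; rewrite /phi /al /be /al1 /be1 !natrB ?(ltnW nk) ?(ltnW mk) ?(ltnW nk1) ?(ltnW mk1) //.
  move=> c3; nra.
move=> gamma d l1 l2 Cc Dc gamma_n C_n D_n Cs_n Ds_n T_k.
have lsum : - (l1 + l2)^-1 = - (al / be) :> R.
  rewrite /l2 /al /be !natrB ?(ltnW nk) ?(ltnW mk) // addrC subrK invf_div //.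
have sm1 : (-1 : R) != 0 by rewrite oppr_eq0 oner_eq0.
have sp1 : (1 : R) != 0 by rewrite oner_eq0.
have d0 : (0 < mv k)%N by apply: leq_ltn_trans (leq0n _) mk.
split.
  move=> HT n0 Hn0.
  rewrite /T_k (yint_phi (R:=R) nk mk) -/al -/be in HT.
  have hT' : phi al be (nv k) (mv k) < be * delta%:R by rewrite -ltr_pdivrMl // mulrC.
  have g1 : forall a b, gsum a b 1 = 1%N by move=> a b; rewrite /gsum big_ord1.
  pose Xn n := (nv k * gsum delta (mv k) n)%N.
  pose Yn n := (mv k ^ n)%N.
  pose Xb n := (nv k * gsum delta (mv k) n + (nv k.+1 - nv k) * mv k ^ n.-1)%N.
  pose Yb n := (mv k.+1 * mv k ^ n.-1)%N.
  pose c n := phi al be (Xn n) (Yn n).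
  have crec : forall n, c n.+1 = al * (nv k)%:R * (delta ^ n)%:R + (mv k)%:R * c n.
    by move=> n; rewrite /c /Xn /Yn gsumS /phi expnS !(natrM, natrD); ring.
  have cb : forall n, (1 <= n)%N -> phi al be (Xb n) (Yb n) = c n.
    move=> n Hn; rewrite /c /Xb /Yb /Yn /phi.
    have -> : (mv k ^ n = mv k * mv k ^ n.-1)%N by rewrite -expnS prednK.
    rewrite !natrD !natrM /al /be !natrB ?(ltnW nk) ?(ltnW mk) //; ring.
  have dpos : (0 : R) < (mv k)%:R by rewrite ltr0n.
  have I1 : forall n, (1 <= n)%N -> c n < be * (delta ^ n)%:R.
    elim=> [//|n IH] _; case: n IH => [|n] IH.
      by rewrite /c /Xn /Yn g1 muln1 expn1.
    have IH' := IH isT.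
    have Dp : (0 : R) < (delta ^ n.+1)%:R by rewrite ltr0n expn_gt0 Hd.
    rewrite crec [(delta ^ n.+2)%N]expnS natrM.
    have h1 : (mv k)%:R * c n.+1 < (mv k)%:R * (be * (delta ^ n.+1)%:R) by rewrite ltr_pM2l.
    have h2 : (delta ^ n.+1)%:R * phi al be (nv k) (mv k) < (delta ^ n.+1)%:R * (be * delta%:R) by rewrite ltr_pM2l.
    move: h1 h2; rewrite /phi.
    move: (c n.+1) (delta ^ n.+1)%:R => cn D h1 h2.
    nra.
  have I2 : forall n, (1 <= n)%N -> al * (delta ^ n)%:R * be1 < c n * al1.
    elim=> [//|n IH] _; case: n IH => [|n] IH.
      rewrite /c /Xn /Yn g1 muln1 expn1.
      move: hT1 conv; rewrite /phi => hT1 conv.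
      have h1 : al * (be1 * delta%:R) <= al * (al1 * (nv k)%:R + be1 * (mv k)%:R) by rewrite ler_pM2l.
      have h2 : (mv k)%:R * (al * be1) < (mv k)%:R * (al1 * be) by rewrite ltr_pM2l.
      nra.
    have IH' := IH isT.
    have Dp : (0 : R) < (delta ^ n.+1)%:R by rewrite ltr0n expn_gt0 Hd.
    rewrite crec [(delta ^ n.+2)%N]expnS natrM.
    have h1 : (mv k)%:R * (al * (delta ^ n.+1)%:R * be1) < (mv k)%:R * (c n.+1 * al1) by rewrite ltr_pM2l.
    have h2 : (delta ^ n.+1)%:R * (al * (be1 * delta%:R)) <= (delta ^ n.+1)%:R * (al * phi al1 be1 (nv k) (mv k)).
      by rewrite ler_pM2l // ler_pM2l.
    move: h1 h2; rewrite /phi.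
    move: (c n.+1) (delta ^ n.+1)%:R => cn D h1 h2.
    nra.
  have u_eq : forall n, phi al be (delta ^ n) 0 = al * (delta ^ n)%:R by move=> n; rewrite /phi mulr0 addr0.
  have Hu : forall n, (1 <= n)%N -> forall a b, q a b != 0 ->
     (nv k)%:R * phi al be (delta ^ n) 0 + (mv k)%:R * c n <=
       a%:R * phi al be (delta ^ n) 0 + b%:R * c n /\
     (a%:R * phi al be (delta ^ n) 0 + b%:R * c n =
       (nv k)%:R * phi al be (delta ^ n) 0 + (mv k)%:R * c n -> a = nv k /\ b = mv k).
    move=> n Hn; apply: (coneQ al0 Lk Lj' conv); rewrite u_eq; last exact: I2.
    have := I1 n Hn; move: (c n) (delta ^ n)%:R => x D h; nra.
  have [q_gd _] := Lk.
  have [LP1 LT1] := base1 al0 be0 sm1 Hd Hp0 Hpd Lk.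
  have [_ LB1] := base1 al0 be0 sp1 Hd Hp0 Hpd Lk'.
  have LT1' : Lead (fiter p q 1).2 al be (-1) (Xn 1%N) (Yn 1%N) by rewrite /Xn /Yn g1 muln1 expn1.
  have LB1' : Lead (fiter p q 1).2 al be 1 (Xb 1%N) (Yb 1%N).
    by rewrite /Xb /Yb g1 /= expn0 !muln1 subnKC // ltnW.
  have LP1' : Lead (fiter p q 1).1 al be 1 delta 0 by have [] := base1 al0 be0 sp1 Hd Hp0 Hpd Lk'.
  have top := @cone_ind R p q al be (-1) delta (nv k) (mv k) Xn Yn al0 (ltW be0) sm1 Hd Hp0 Hpd q_gd LP1 LT1'.
  have bot := @cone_ind R p q al be 1 delta (nv k) (mv k) Xb Yb al0 (ltW be0) sp1 Hd Hp0 Hpd q_gd LP1' LB1'.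
  have HXYt : forall m, (1 <= m)%N -> (0 < Xn m + Yn m)%N.
    by move=> m _; rewrite addn_gt0 /Yn expn_gt0 d0 orbT.
  have Hrect : forall m, (1 <= m)%N -> Xn m.+1 = (nv k * delta ^ m + mv k * Xn m)%N /\
      Yn m.+1 = (nv k * 0 + mv k * Yn m)%N.
    by move=> m _; rewrite /Xn /Yn gsumS expnS; split; ring.
  have [_ LTn] := top HXYt Hrect Hu n0 Hn0.
  have dpos' : forall m, (0 < mv k ^ m.-1)%N by move=> m; rewrite expn_gt0 d0.
  have Cpos : forall m, (0 < (nv k.+1 - nv k) * mv k ^ m.-1)%N by move=> m; rewrite muln_gt0 subn_gt0 nk dpos'.
  have HXYb : forall m, (1 <= m)%N -> (0 < Xb m + Yb m)%N.
    by move=> m _; rewrite /Xb !addn_gt0 Cpos !orbT.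
  have Hrecb : forall m, (1 <= m)%N -> Xb m.+1 = (nv k * delta ^ m + mv k * Xb m)%N /\
      Yb m.+1 = (nv k * 0 + mv k * Yb m)%N.
    by case=> [//|m] _; rewrite /Xb /Yb gsumS /= [(mv k ^ m.+1)%N]expnS; split; ring.
  have Hub : forall m, (1 <= m)%N -> forall a b, q a b != 0 ->
     (nv k)%:R * phi al be (delta ^ m) 0 + (mv k)%:R * phi al be (Xb m) (Yb m) <=
       a%:R * phi al be (delta ^ m) 0 + b%:R * phi al be (Xb m) (Yb m) /\
     (a%:R * phi al be (delta ^ m) 0 + b%:R * phi al be (Xb m) (Yb m) =
       (nv k)%:R * phi al be (delta ^ m) 0 + (mv k)%:R * phi al be (Xb m) (Yb m) -> a = nv k /\ b = mv k).
    by move=> m Hm; rewrite (cb m Hm); exact: Hu m Hm.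
  have [_ LBn] := bot HXYb Hrecb Hub n0 Hn0.
  have lt : (Xn n0 < Xb n0)%N by rewrite /Xb /Xn -[X in (X < _)%N]addn0 ltn_add2l Cpos.
  have [NV [SL YI]] := finish al0 be0 LTn LBn (cb n0 Hn0) lt.
  have eC : (C_n n0, D_n n0) = pt R (Xb n0) (Yb n0).
    rewrite /C_n /D_n /pt /Xb /Yb /gamma_n /gamma /d /Cc /Dc !(natrD, natrM) (natrB _ (ltnW nk)).
    congr pair; ring.
  rewrite /Qn lsum eC.
  change (pt R (gamma_n n0) (d ^ n0)) with (pt R (Xn n0) (Yn n0)).
  split; first exact: NV.
  split; first exact: SL.
  rewrite YI ltr_pdivrMr // mulrC; exact: I1 n0 Hn0.
move=> ET HD n Hn.
rewrite /T_k (yint_phi (R:=R) nk mk) -/al -/be in ET.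
have ET' : phi al be (nv k) (mv k) = be * delta%:R.
  by rewrite -ET mulrC divfK // gt_eqF.
have [_ LT] := edge_ind al0 be0 sm1 Hd Hp0 Hpd Lk ET' d0 n.
have EB : phi al be (nv k.+1) (mv k.+1) = be * delta%:R by rewrite eqk.
have [_ LB] := edge_ind al0 be0 sp1 Hd Hp0 Hpd Lk' EB HD n.
have pT := phi_gs ET' n; have pB := phi_gs EB n.
have lt : (gsum delta (mv k) n * nv k < gsum delta (mv k.+1) n * nv k.+1)%N.
  rewrite -(ltr_nat R).
  have hy : ((mv k.+1) ^ n)%:R < ((mv k) ^ n)%:R :> R by rewrite ltr_nat ltn_exp2r // -lt0n.
  move: pT pB; rewrite /phi => pT pB.
  have : al * (gsum delta (mv k) n * nv k)%:R < al * (gsum delta (mv k.+1) n * nv k.+1)%:R.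
    move: pT pB hy be0.
    set x1 := al * _; set x2 := al * _; set y1 := (_ ^ n)%:R; set y2 := (_ ^ n)%:R.
    move=> pT pB hy be0'; nra.
  by rewrite ltr_pM2l.
have [NV [SL YI]] := finish al0 be0 LT LB (etrans pB (esym pT)) lt.
rewrite /Qn /gamma_n /gamma /d /Cs_n /Cc /Dc /Ds_n [(nv k * _)%N]mulnC lsum.
split; first exact: NV.
split; first exact: SL.
by rewrite YI pT mulrC mulKf // gt_eqF.
Qed.
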